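(* Let $T, D, E$ be positive integers ($E$ may also be $0$) and let $k$ be a positive integer with $k \ge 2T \log(D)/\log(2T)$. Let $p_1 < p_2 < \cdots < p_{k+2E}$ be primes with $2T < p_1$, and for each $i$ let $\zeta_i \ne 1$ be a $p_i$-th root of unity in $\mathbb{C}$. Let $f \in \mathbb{Q}[x]$ have at most $T$ nonzero terms and $\deg f \le D$, and suppose we are given values $y_i = f(\zeta_i) + \epsilon_i$, $1 \le i \le k+2E$, where $\epsilon_i \in \mathbb{C}$ and at most $E$ of the $\epsilon_i$ are nonzero. If $g \in \mathbb{Q}[x]$ has at most $T$ nonzero terms, $\deg g \le D$, and $g(\zeta_i) = y_i$ for at least $k+E$ indices $i$, then $g = f$. *)

(* Defs.v *)
From HB Require Import structures.
From mathcomp Require Import all_boot all_order all_algebra.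
From mathcomp Require Import complex.
From mathcomp Require Import reals Rstruct.
From Stdlib Require Reals.
Set Implicit Arguments. Unset Strict Implicit. Unset Printing Implicit Defensive.
Import Order.TTheory GRing.Theory Num.Theory.
Local Open Scope ring_scope.

Definition CC : Type := (Rdefinitions.R)[i].

Definition nterms (f : {poly rat}) : nat := count (fun c => c != 0) f.

Definition evalC (f : {poly rat}) (z : CC) : CC := (map_poly (ratr : rat -> CC) f).[z].

(* Main.v *)
Require Import Defs.
From HB Require Import structures.
From mathcomp Require Import all_boot all_order all_algebra.
From mathcomp Require Import complex.
From mathcomp Require Import reals Rstruct.
From mathcomp Require Import all_field zify.
From Stdlib Require Reals.
From Stdlib Require Rdefinitions Raxioms RIneq Rpower Rfunctions.
From Stdlib Require Import Lra.
Import Order.TTheory GRing.Theory Num.Theory.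

Section RealPart.
Import Rdefinitions.
Local Open Scope R_scope.
Lemma real_bound (T D k : nat) : (0 < T)%nat -> (0 < D)%nat ->
  (Rdefinitions.Rle (Rdefinitions.Rdiv
       (Rdefinitions.Rmult (Raxioms.INR (2 * T)%nat) (Rpower.ln (Raxioms.INR D)))
       (Rpower.ln (Raxioms.INR (2 * T)%nat))) (Raxioms.INR k)) ->
  (expn D (2 * T)%nat <= expn (2 * T)%nat k)%nat.
Proof.
move=> T0 D0 H.
have eP : forall m n, expn m n = PeanoNat.Nat.pow m n.
  by move=> m; elim=> // n IH; rewrite expnS IH.
rewrite !eP.
have a1 : 1 < Raxioms.INR (2 * T)%nat.
  replace 1 with (Raxioms.INR 1) by reflexivity; apply: RIneq.lt_INR; lia.
have la : 0 < Rpower.ln (Raxioms.INR (2 * T)%nat) by rewrite -Rpower.ln_1; apply: Rpower.ln_increasing; lra.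
have Dp : 0 < Raxioms.INR D by apply: RIneq.lt_0_INR; lia.
have H2 : Raxioms.INR (2 * T)%nat * Rpower.ln (Raxioms.INR D) <= Raxioms.INR k * Rpower.ln (Raxioms.INR (2 * T)%nat).
  have := RIneq.Rmult_le_compat_r _ _ _ (RIneq.Rlt_le _ _ la) H.
  rewrite /Rdiv Raxioms.Rmult_assoc Raxioms.Rinv_l ?RIneq.Rmult_1_r //; lra.
rewrite -Rpower.ln_pow // -Rpower.ln_pow in H2; last lra.
apply/ssrnat.leP; apply: RIneq.INR_le; rewrite !RIneq.pow_INR.
apply: RIneq.Rnot_lt_le => lt.
have := Rpower.ln_increasing _ _ _ lt.
have : 0 < Rpow_def.pow (Raxioms.INR (2 * T)%nat) k by apply: Rfunctions.pow_lt; lra.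
move=> pos /(_ pos); lra.
Qed.
End RealPart.

Local Open Scope ring_scope.

Definition Qp (p : nat) : {poly rat} := \poly_(i < p) 1.

Lemma size_Qp p : size (Qp p) = p.
Proof.
case: p => [|p]; first by rewrite /Qp; apply/eqP; rewrite size_poly_eq0 poly_def big_ord0.
by rewrite size_poly_eq ?oner_eq0.
Qed.

Lemma root_Qp (F : numFieldType) p (x : F) : x ^+ p = 1 -> x != 1 ->
  root (map_poly ratr (Qp p)) x.
Proof.
move=> xp x1; rewrite /root (@horner_coef_wide _ p); last first.
  by rewrite size_map_poly size_Qp.
have ->: \sum_(i < p) (map_poly ratr (Qp p))`_i * x ^+ i = \sum_(i < p) x ^+ i.
  by apply: eq_bigr => i _; rewrite coef_map coef_poly ltn_ord /= (ratr_is_multiplicative F).2 mul1r.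
have: (x - 1) * \sum_(i < p) x ^+ i = 0 by rewrite -subrX1 xp subrr.
by move/eqP; rewrite mulf_eq0 subr_eq0 (negbTE x1).
Qed.

Lemma minpoly_Qp p (z : algC) : prime p -> p.-primitive_root z ->
  forall q : {poly rat}, root (map_poly ratr q) z -> (p <= size q)%N \/ q = 0.
Proof.
move=> pp prim q rq.
have [m [Dm mm] dvm] := minCpolyP z.
have szm : size m = p.
  rewrite -(size_map_poly (ratr : rat -> algC)) -Dm (minCpoly_cyclotomic prim).
  by rewrite size_cyclotomic totient_prime // prednK // prime_gt0.
have [->|q0] := eqVneq q 0; first by right.
left; rewrite -szm; apply: dvdp_leq => //; by rewrite -dvm.
Qed.

Lemma dvdQ (p : nat) (x : CC) : prime p -> x ^+ p = 1 -> x != 1 ->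
  forall r : {poly rat}, root (map_poly ratr r) x -> Qp p %| r.
Proof.
move=> pp xp x1 r rr.
have [z prim] := C_prim_root_exists (prime_gt0 pp).
have zp : z ^+ p = 1 by apply: prim_expr_order.
have z1 : z != 1.
  apply/negP => /eqP z1; move: (prim_order_dvd prim 1); rewrite z1 expr1n eqxx.
  by rewrite dvdn1 => /eqP p1; move: (prime_gt1 pp); rewrite p1.
pose d := gcdp r (Qp p).
have Q0 : Qp p != 0 by rewrite -size_poly_eq0 size_Qp -lt0n prime_gt0.
have dQ : d %| Qp p by apply: dvdp_gcdr.
have rd : root (map_poly ratr d) x by rewrite /d gcdp_map root_gcd rr root_Qp.
have d0 : d != 0 by apply: contraNneq Q0 => d0; move: dQ; rewrite d0 dvd0p.
set e := Qp p %/ d.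
have Qde : Qp p = e * d by rewrite /e divpK.
have e0 : e != 0 by apply: contraNneq Q0 => e0; rewrite Qde e0 mul0r.
have rz := @root_Qp _ p z zp z1.
rewrite Qde rmorphM rootM in rz.
case/orP: rz => rz.
  case: (@minpoly_Qp p z pp prim _ rz) => [se|]; last by move/eqP; rewrite (negbTE e0).
  have := congr1 (fun q : {poly rat} => size q) Qde; rewrite size_mul // size_Qp => sQ.
  have sd : (size d <= 1)%N.
    have : (0 < size d)%N by rewrite size_poly_gt0.
    have H : forall a b c : nat, (0 < b -> c <= a -> c = (a + b).-1 -> b <= 1)%N by move=> a b c; lia.
    by move=> h; apply: H h se sQ.
  have := root_size_gt1 _ rd; rewrite size_map_poly => /(_ _) h.
  suff : (1 < size d)%N by rewrite ltnNge sd.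
  apply: h; by rewrite map_poly_eq0.
case: (@minpoly_Qp p z pp prim _ rz) => [sd|/eqP]; last by rewrite (negbTE d0).
have : d %= Qp p.
  rewrite -dvdp_size_eqp // size_Qp eqn_leq sd andbT.
  by rewrite -(size_Qp p); apply: dvdp_leq.
move=> /eqp_dvdl <-; apply: dvdp_gcdl.
Qed.

Lemma constQ (p : nat) (x : CC) (r : {poly rat}) : prime p -> x ^+ p = 1 -> x != 1 ->
  (size r <= p)%N -> root (map_poly ratr r) x ->
  exists c0 : rat, forall j, (j < p)%N -> r`_j = c0.
Proof.
move=> pp xp x1 sr rr.
have /dvdpP [q rq] := dvdQ p x pp xp x1 r rr.
have [->|r0] := eqVneq r 0; first by exists 0 => j _; rewrite coef0.
have q0 : q != 0 by apply: contraNneq r0 => q0; rewrite rq q0 mul0r.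
have Q0 : Qp p != 0 by rewrite -size_poly_eq0 size_Qp -lt0n prime_gt0.
have sq : (size q <= 1)%N.
  have := congr1 (fun q : {poly rat} => size q) rq; rewrite size_mul // size_Qp => sQ.
  have : (0 < size q)%N by rewrite size_poly_gt0.
  have H : forall a b c : nat, (0 < a -> a + c - 1 <= c -> a <= 1)%N by move=> a b c; lia.
  move=> h; apply: (H _ 0%N p h); rewrite -subn1 in sQ; rewrite -sQ //.
have [c qc] : exists c, q = c%:P.
  by exists q`_0; apply: size1_polyC.
exists c => j jp; rewrite rq qc coefCM coef_poly jp mulr1 //.
Qed.

Definition supp (D : nat) (h : {poly rat}) : {set 'I_D.+1} := [set e : 'I_D.+1 | h`_e != 0].
Definition e0 (h : {poly rat}) : nat := find (fun c => c != 0) h.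
Definition NN (D : nat) (h : {poly rat}) : nat :=
  \prod_(e in supp D h) (if (e : nat) == e0 h then 1%N else (e - e0 h)%N).

Lemma e0P (h : {poly rat}) : h != 0 ->
  [/\ h`_(e0 h) != 0, (e0 h < size h)%N & forall e, h`_e != 0 -> (e0 h <= e)%N].
Proof.
move=> h0.
have hh : has (fun c => c != 0) h.
  apply/hasP; exists (lead_coef h); last by rewrite lead_coef_eq0.
  by rewrite lead_coefE mem_nth // prednK // size_poly_gt0.
split.
- exact: (nth_find 0 hh).
- by rewrite /e0 -has_find.
move=> e he; rewrite leqNgt; apply/negP => lt.
by move: (before_find 0 lt); rewrite he.
Qed.

Lemma NN_gt0 D h : h != 0 -> (0 < NN D h)%N.
Proof.
move=> h0; have [_ _ m] := e0P h h0.
rewrite /NN big_mkcond /=; apply: prodn_gt0 => e.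
case: ifP => // /[!inE] he; case: eqP => // ne.
by rewrite subn_gt0 ltn_neqAle (m _ he) andbT; apply/eqP => E; apply: ne.
Qed.

Lemma NN_le D h : (0 < D)%N -> (NN D h <= D ^ #|supp D h|)%N.
Proof.
move=> D0; rewrite /NN -prod_nat_const; apply: leq_prod => e _.
case: ifP => // _; apply: leq_trans (leq_subr _ _) _.
by rewrite -ltnS ltn_ord.
Qed.

Lemma keyB (p D : nat) (x : CC) (h : {poly rat}) : prime p -> x ^+ p = 1 -> x != 1 ->
  h != 0 -> (size h <= D.+1)%N -> (#|supp D h| < p)%N ->
  root (map_poly ratr h) x -> (p %| NN D h)%N.
Proof.
move=> pp xp x1 h0 sh cardp rh.
have p0 : (0 < p)%N := prime_gt0 pp.
pose c j := \sum_(e < D.+1 | (e %% p == j)%N) h`_e.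
pose r := \poly_(j < p) c j.
have rr : root (map_poly ratr r) x.
  have : (map_poly ratr h).[x] = 0 by apply/eqP.
  rewrite /root (@horner_coef_wide _ D.+1) ?size_map_poly //.
  rewrite (@horner_coef_wide _ p) ?size_map_poly ?size_poly // => H.
  apply/eqP; rewrite -[RHS]H.
  have -> : \sum_(i < p) (map_poly ratr r)`_i * x ^+ i =
     \sum_(i < p) \sum_(e < D.+1) (if (e %% p == i)%N then ratr h`_e * x ^+ e else 0).
    apply: eq_bigr => i _; rewrite coef_map coef_poly ltn_ord /c raddf_sum mulr_suml.
    rewrite big_mkcond /=; apply: eq_bigr => e _; case: eqP => // <-.
    by rewrite expr_mod.
  rewrite exchange_big /=; apply: eq_bigr => e _.
  rewrite coef_map -big_mkcond /=.
  by rewrite (big_pred1 (Ordinal (ltn_pmod e p0))).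
have [c0 rc] := constQ p x r pp xp x1 (size_poly _ _) rr.
have cc : forall j, (j < p)%N -> c j = c0.
  by move=> j jp; rewrite -(rc j jp) coef_poly jp.
have c00 : c0 = 0.
  apply/eqP; apply: contraT => c0n.
  pose f (e : 'I_D.+1) : 'I_p := Ordinal (ltn_pmod e p0).
  have : [set: 'I_p] \subset f @: supp D h.
    apply/subsetP => j _; apply: contraT => nj.
    move: c0n; rewrite -(cc j (ltn_ord j)) /c big1 ?eqxx // => e /eqP ej.
    apply: contraNeq nj => he; apply/imsetP; exists e; first by rewrite inE.
    by apply: val_inj => /=; rewrite ej.
  move/subset_leq_card; rewrite cardsT card_ord => h1.
  by move: (leq_trans h1 (leq_imset_card _ _)); rewrite leqNgt cardp.
have [he0 se0 me0] := e0P h h0.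
have o0lt : (e0 h < D.+1)%N by apply: leq_trans se0 sh.
pose o0 : 'I_D.+1 := Ordinal o0lt.
apply: contraT => nN.
have : c (e0 h %% p)%N = 0 by rewrite cc ?ltn_pmod.
rewrite /c (bigD1 o0) /=; last by rewrite eqxx.
rewrite big1 ?addr0; first by move/eqP; rewrite (negbTE he0).
move=> e /andP [emod eo]; apply/eqP; apply: contraNT nN => he.
have ene : (e : nat) != e0 h by apply: contraNneq eo => E; apply/eqP/val_inj.
have ege : (e0 h < e)%N by rewrite ltn_neqAle eq_sym ene me0.
rewrite /NN (bigD1 e) /=; last by rewrite inE.
rewrite (negbTE ene); apply: dvdn_mulr.
by rewrite -eqn_mod_dvd ?(ltnW ege) //.
Qed.


Lemma count_sum (s : seq rat) n : (size s <= n)%N ->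
  count (fun c => c != 0) s = (\sum_(i < n) (nth 0%R s i != 0%R))%N.
Proof.
elim: s n => [|a s IH] [|n] //=.
- by rewrite big_ord0.
- by rewrite big1 // => i _; rewrite nth_nil eqxx.
- by rewrite ltnS => hs; rewrite big_ord_recl /= (IH n hs).
Qed.

Lemma supp_nterms D (q : {poly rat}) : (size q <= D.+1)%N -> #|supp D q| = nterms q.
Proof.
move=> sq; rewrite /nterms (count_sum _ _ sq) -sum1_card big_mkcond /=.
by apply: eq_bigr => i _; rewrite inE; case: (_ != _).
Qed.

Lemma notdvd_prod (I : eqType) (q : I -> nat) (a : nat) (t : seq I) :
  prime a -> a \notin map q t -> (forall j, j \in t -> prime (q j)) ->
  ~~ (a %| \prod_(i <- t) q i)%N.
Proof.
move=> pa; elim: t => [|b t IHt] /=.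
  by move=> _ _; rewrite big_nil dvdn1 neq_ltn prime_gt1 ?orbT.
rewrite inE negb_or => /andP [nab nat] Ht.
rewrite big_cons Euclid_dvdM // negb_or dvdn_prime2 ?nab ?Ht ?mem_head //=.
by apply: IHt => // j jt; apply: Ht; rewrite inE jt orbT.
Qed.

Lemma prod_dvd (I : eqType) (s : seq I) (q : I -> nat) N :
  uniq (map q s) -> (forall i, i \in s -> prime (q i) && (q i %| N)%N) ->
  (\prod_(i <- s) q i %| N)%N.
Proof.
elim: s => [|a s IH] /=; first by rewrite big_nil dvd1n.
move=> /andP [na us] H; rewrite big_cons.
have /andP [pa da] := H a (mem_head _ _).
have nd : ~~ (q a %| \prod_(i <- s) q i)%N.
  apply: notdvd_prod => // j js.
  by move: (H j); rewrite inE js orbT => /(_ isT) /andP [].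
rewrite Gauss_dvd ?prime_coprime // da /=.
by apply: IH => // i iS; apply: H; rewrite inE iS orbT.
Qed.

Theorem corollary3 (T D E k : nat) (p : nat -> nat) (zeta : nat -> CC)
    (f g : {poly rat}) (eps y : nat -> CC) :
  (0 < T)%N -> (0 < D)%N -> (0 < k)%N ->
  (Rdefinitions.Rle (Rdefinitions.Rdiv
       (Rdefinitions.Rmult (Raxioms.INR (2 * T)) (Rpower.ln (Raxioms.INR D)))
       (Rpower.ln (Raxioms.INR (2 * T)))) (Raxioms.INR k)) ->
  (forall i, (i < k + 2 * E)%N -> prime (p i)) ->
  (forall i j, (i < j)%N -> (j < k + 2 * E)%N -> (p i < p j)%N) ->
  (2 * T < p 0)%N ->
  (forall i, (i < k + 2 * E)%N -> (p i).-unity_root (zeta i) /\ zeta i != 1) ->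
  (nterms f <= T)%N -> (size f <= D.+1)%N ->
  (forall i, (i < k + 2 * E)%N -> y i = evalC f (zeta i) + eps i) ->
  (#|[set i : 'I_(k + 2 * E) | eps i != 0%R]| <= E)%N ->
  (nterms g <= T)%N -> (size g <= D.+1)%N ->
  (k + E <= #|[set i : 'I_(k + 2 * E) | evalC g (zeta i) == y i]|)%N ->
  g = f.
Proof.
move=> T0 D0 k0 HR pr pinc pT zet nf sf yeq cardB ng sg cardG.
set h := g - f.
have [h0|h0] := eqVneq h 0; first by apply/eqP; rewrite -subr_eq0 -/h h0.
exfalso.
set Bad := [set i : 'I_(k + 2 * E) | eps i != 0].
set Good := [set i : 'I_(k + 2 * E) | evalC g (zeta i) == y i].
set Gd := Good :\: Bad.
have cGd : (k <= #|Gd|)%N.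
  rewrite cardsD; have : (#|Good :&: Bad| <= E)%N.
    by apply: leq_trans cardB; apply: subset_leq_card; apply: subsetIr.
  move: cardG; move: (#|Good|) (#|Good :&: Bad|) => a b; lia.
have sh : (size h <= D.+1)%N.
  by apply: leq_trans (size_polyD _ _) _; rewrite size_opp geq_max sg sf.
have ssupp : (#|supp D h| <= 2 * T)%N.
  have : supp D h \subset supp D g :|: supp D f.
    apply/subsetP => e; rewrite !inE /h coefB.
    apply: contraR; rewrite negb_or !negbK => /andP [/eqP -> /eqP ->].
    by rewrite subrr.
  move/subset_leq_card => H; apply: leq_trans H _.
  rewrite cardsU (supp_nterms _ _ sg) (supp_nterms _ _ sf).
  move: ng nf; move: (nterms g) (nterms f) (#|_ :&: _|) => a b c; lia.
have p0le : forall i, (i < k + 2 * E)%N -> (p 0 <= p i)%N.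
  move=> i il; case: i il => [//|i] il; apply: ltnW; exact: pinc.
have pinj : {in enum Gd &, injective (fun i : 'I_(k + 2 * E) => p i)}.
  move=> i j _ _ /= pij; apply: val_inj => /=.
  case: (ltngtP i j) => // ij.
  - by have := pinc _ _ ij (ltn_ord j); rewrite pij ltnn.
  - by have := pinc _ _ ij (ltn_ord i); rewrite pij ltnn.
have dv : (\prod_(i in Gd) p i %| NN D h)%N.
  rewrite -big_enum /=; apply: prod_dvd.
    by rewrite (map_inj_in_uniq pinj) enum_uniq.
  move=> i; rewrite mem_enum !inE => /andP [nb gi].
  have pi := pr i (ltn_ord i); rewrite pi /=.
  have [zp z1] := zet i (ltn_ord i).
  apply: (keyB (p i) D (zeta i) h) => //.
  - by move: zp; rewrite unity_rootE => /eqP.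
  - by apply: leq_ltn_trans ssupp (leq_trans pT (p0le _ (ltn_ord i))).
  rewrite /root /h rmorphB /= hornerD hornerN.
  move: gi; rewrite /evalC => /eqP ->; rewrite yeq ?ltn_ord //.
  move: nb; rewrite negbK => /eqP ->; rewrite addr0 subrr.
  by [].
have lower : ((2 * T).+1 ^ #|Gd| <= \prod_(i in Gd) p i)%N.
  rewrite -prod_nat_const; apply: leq_prod => i _.
  exact: leq_trans pT (p0le _ (ltn_ord i)).
have hN := dvdn_leq (NN_gt0 D h h0) dv.
have hD := NN_le D h D0.
have rb := real_bound T D k T0 D0 HR.
have c1 : ((2 * T).+1 ^ k <= (2 * T).+1 ^ #|Gd|)%N by apply: leq_pexp2l.
have c2 : (D ^ #|supp D h| <= D ^ (2 * T))%N by apply: leq_pexp2l.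
have c3 : ((2 * T) ^ k < (2 * T).+1 ^ k)%N by rewrite ltn_exp2r.
have := leq_trans c1 (leq_trans lower (leq_trans hN (leq_trans hD (leq_trans c2 rb)))).
by rewrite leqNgt c3.
Qed.
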